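(* Let $n>k+\ell$, and let $\mathcal F\subset\binom{[n]}{k}$, $\mathcal G\subset\binom{[n]}{\ell}$ be non-trivial cross-intersecting families forming a saturated pair, shifted ad extremis with respect to $\tau(\mathcal F)\ge2$, and not both initial. If the 2-cover graph $\hat{\mathcal H}$ of $\mathcal F$ is triangle-free, then there are disjoint sets $X,Y\subset[n]$ with $X\cup Y=[|X|+|Y|]$, $2\le|X|\le k$, $2\le|Y|\le k$, such that the edge set of $\hat{\mathcal H}$ is exactly $\{\{x,y\}:x\in X,y\in Y\}$.
   Context: Non-trivial: nonempty and not a star (a star is a family whose members share a common element). Cross-intersecting: $F\cap G\ne\emptyset$ for all $F\in\mathcal F,G\in\mathcal G$; saturated pair: adding any further $k$-set to $\mathcal F$ or $\ell$-set to $\mathcal G$ destroys cross-intersection. Shifting: for $i<j$, $S_{ij}(F)=(F\setminus\{j\})\cup\{i\}$ if $j\in F$, $i\notin F$, $(F\setminus\{j\})\cup\{i\}\notin\mathcal F$, else $S_{ij}(F)=F$; $S_{ij}(\mathcal F)=\{S_{ij}(F):F\in\mathcal F\}$. Shifted ad extremis with respect to $\tau(\mathcal F)\ge2$: for every $1\le i<j\le n$, either $S_{ij}(\mathcal F)=\mathcal F$ and $S_{ij}(\mathcal G)=\mathcal G$, or $S_{ij}(\mathcal F)$ is a star. Initial: with $(a_1,\dots,a_k)\prec(b_1,\dots,b_k)$ iff $a_i\le b_i$ for all $i$, a family is initial if $A\prec B\in\mathcal F$ implies $A\in\mathcal F$. The 2-cover graph $\hat{\mathcal H}$ has vertex set $[n]$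 and edges $\{i,j\}$ such that every $F\in\mathcal F$ meets $\{i,j\}$. *)

(* Defs.v *)
From mathcomp Require Import all_boot.
Set Implicit Arguments. Unset Strict Implicit. Unset Printing Implicit Defensive.

(* Ground set [n] is modelled by 'I_n = {0,...,n-1} (shift by one). *)

Definition uniformly (n k : nat) (F : {set {set 'I_n}}) : Prop :=
  forall A, A \in F -> #|A| = k.

Definition is_star (n : nat) (F : {set {set 'I_n}}) : Prop :=
  exists x : 'I_n, forall A, A \in F -> x \in A.

Definition nontrivial (n : nat) (F : {set {set 'I_n}}) : Prop :=
  F != set0 /\ ~ is_star F.

Definition cross_intersecting (n : nat) (F G : {set {set 'I_n}}) : Prop :=
  forall A B, A \in F -> B \in G -> A :&: B != set0.

Definition saturated_pair (n k l : nat) (F G : {set {set 'I_n}}) : Prop :=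
  (forall A : {set 'I_n}, #|A| = k -> A \notin F ->
     exists2 B, B \in G & A :&: B = set0) /\
  (forall B : {set 'I_n}, #|B| = l -> B \notin G ->
     exists2 A, A \in F & A :&: B = set0).

Definition shift_set (n : nat) (i j : 'I_n) (F : {set {set 'I_n}})
  (A : {set 'I_n}) : {set 'I_n} :=
  if [&& j \in A, i \notin A & (i |: (A :\ j)) \notin F]
  then i |: (A :\ j) else A.

Definition shift_fam (n : nat) (i j : 'I_n) (F : {set {set 'I_n}})
  : {set {set 'I_n}} :=
  [set shift_set i j F A | A in F].

Definition shifted_ad_extremis (n : nat) (F G : {set {set 'I_n}}) : Prop :=
  forall i j : 'I_n, i < j ->
    (shift_fam i j F = F /\ shift_fam i j G = G) \/ is_star (shift_fam i j F).

Definition sorted_elems (n : nat) (A : {set 'I_n}) : seq nat :=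
  sort leq [seq val x | x <- enum A].

Definition shift_prec (n : nat) (A B : {set 'I_n}) : Prop :=
  #|A| = #|B| /\
  forall t, t < #|A| -> nth 0 (sorted_elems A) t <= nth 0 (sorted_elems B) t.

Definition initial (n : nat) (F : {set {set 'I_n}}) : Prop :=
  forall A B : {set 'I_n}, shift_prec A B -> B \in F -> A \in F.

Definition cover2_edge (n : nat) (F : {set {set 'I_n}}) (i j : 'I_n) : bool :=
  (i != j) && [forall A in F, (i \in A) || (j \in A)].

Definition triangle_free (n : nat) (F : {set {set 'I_n}}) : Prop :=
  ~ exists a b c : 'I_n,
      [/\ cover2_edge F a b, cover2_edge F b c & cover2_edge F a c].

(* Main.v *)
Require Import Defs.
From mathcomp Require Import all_boot zify.
Set Implicit Arguments. Unset Strict Implicit. Unset Printing Implicit Defensive.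


Section S.
Variable n : nat.
Implicit Types (F : {set {set 'I_n}}) (A B : {set 'I_n}).

Lemma card_lt (y : nat) : y <= n -> #|[set w : 'I_n | w < y]| = y.
Proof.
elim: y => [|y IH] hy.
  by apply/eqP; rewrite cards_eq0; apply/eqP/setP=> w; rewrite !inE.
have hy' : y < n by [].
have -> : [set w : 'I_n | w < y.+1] = Ordinal hy' |: [set w : 'I_n | w < y].
  by apply/setP=> w; rewrite !inE ltnS leq_eqVlt -val_eqE.
by rewrite cardsU1 inE ltnn IH // ltnW.
Qed.

Lemma fix_inv F (i j : 'I_n) : shift_fam i j F = F ->
  forall A, A \in F -> j \in A -> i \notin A -> i |: (A :\ j) \in F.
Proof.
move=> hF A hA hj hi; apply/negPn/negP=> hn.
have : shift_set i j F A \in F by rewrite -{2}hF; apply: imset_f.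
by rewrite /shift_set hj hi hn /= (negbTE hn).
Qed.

Lemma cover2_sym F (i j : 'I_n) : cover2_edge F i j = cover2_edge F j i.
Proof.
rewrite /cover2_edge eq_sym; congr (_ && _); apply/forall_inP/forall_inP=> H A hA;
by rewrite orbC H.
Qed.

Lemma cover2_irr F (i : 'I_n) : cover2_edge F i i = false.
Proof. by rewrite /cover2_edge eqxx. Qed.

Lemma star_shift F (i j : 'I_n) : i < j -> is_star (shift_fam i j F) -> ~ is_star F ->
  (forall A, A \in F -> i \in shift_set i j F A) /\ cover2_edge F i j.
Proof.
move=> hij [x hx] hnF.
have hs : forall A, A \in F -> x \in shift_set i j F A.
  by move=> A hA; apply: hx; apply: imset_f.
have xi : x = i.
  apply/eqP/negPn/negP=> hxi; apply: hnF; exists x => A hA.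
  move: (hs A hA); rewrite /shift_set; case: ifP => // _.
  by rewrite !inE (negbTE hxi) /= => /andP[].
subst x; split=> //.
rewrite /cover2_edge -val_eqE /= neq_ltn hij /=; apply/forall_inP=> A hA.
move: (hs A hA); rewrite /shift_set; case: ifP=> [/andP[-> _]|_ ->] //.
by rewrite orbT.
Qed.

End S.


Section S.
Variable n : nat.
Implicit Types (F : {set {set 'I_n}}) (A B : {set 'I_n}).

Definition cnt A (y : nat) := #|[set w in A | w < y]|.

Lemma shift_closure F (T : {set 'I_n}) :
  (forall u v : 'I_n, u < v -> v \in T -> forall A, A \in F -> v \in A -> u \notin A ->
     u |: (A :\ v) \in F) ->
  forall d A B, #|B :\: A| <= d -> #|A| = #|B| -> B :\: A \subset T ->
  (forall y, cnt B y <= cnt A y) -> B \in F -> A \in F.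
Proof.
move=> hinv; elim=> [|d IH] A B hd hAB hT hc hB.
  have sBA : B \subset A by rewrite -setD_eq0 -cards_eq0 -leqn0.
  have : B == A by rewrite eqEcard sBA hAB leqnn.
  by move/eqP <-.
case: (set_0Vmem (B :\: A)) => [h0|[v0 hv0]].
  have sBA : B \subset A by rewrite -setD_eq0 h0.
  have : B == A by rewrite eqEcard sBA hAB leqnn.
  by move/eqP <-.
pose v := [arg min_(w < v0 in B :\: A) (val w)].
have [hv hmin] : v \in B :\: A /\ forall w, w \in B :\: A -> v <= w.
  by rewrite /v; case: arg_minnP => // w hw hm.
have [vB vA] : v \in B /\ v \notin A by move: hv; rewrite inE => /andP[-> ->].
have hbelow : forall w : 'I_n, w \in B -> w < v -> w \in A.
  move=> w wB wv; apply/negPn/negP=> wA.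
  by have := hmin w; rewrite inE wA wB leqNgt wv => /(_ isT).
have [u [uA uB uv]] : exists u : 'I_n, [/\ u \in A, u \notin B & u < v].
  case: (boolP [exists u : 'I_n, [&& u \in A, u \notin B & u < v]]).
    by move=> /existsP[u /and3P[? ? ?]]; exists u.
  rewrite negb_exists => /forallP hno; exfalso.
  have h1 : [set w in A | w < v.+1] \subset [set w in B | w < v].
    apply/subsetP=> w; rewrite !inE => /andP[wA wv].
    have wv' : w < v.
      rewrite ltn_neqAle -ltnS wv andbT; apply/negP=> /eqP h.
      have e : w = v by apply: val_inj.
      by subst w; rewrite wA in vA.
    have := hno w; rewrite wA wv' /= andbT negbK => ->; by [].
  have h2 : [set w in B | w < v] \proper [set w in B | w < v.+1].
    apply/properP; split.
      by apply/subsetP=> w; rewrite !inE => /andP[-> h]; rewrite ltnS ltnW.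
    by exists v; rewrite !inE ?vB ?ltnSn // ltnn.
  have := hc v.+1; rewrite /cnt => h3.
  have := subset_leq_card h1; have := proper_card h2; lia.
set B' := u |: (B :\ v).
have hB' : B' \in F.
  apply: hinv => //.
  by apply: (subsetP hT).
have sub : B' :\: A \subset B :\: A.
  apply/subsetP=> w; rewrite !inE => /andP[wA /orP[/eqP e|/andP[_ wB]]].
    by subst w; rewrite uA in wA.
  by rewrite wA wB.
apply: (IH A B' _ _ _ _ hB').
- have : B' :\: A \proper B :\: A.
    apply/properP; split=> //; exists v => //.
    by rewrite !inE eqxx /= vA orbF -val_eqE /= gtn_eqF.
  by move/proper_card=> h; rewrite -ltnS (leq_trans h hd).
- rewrite hAB /B' cardsU1 inE negb_and uB orbT /= (cardsD1 v B) vB.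
  by [].
- apply/subsetP=> w hw; apply: (subsetP hT); exact: (subsetP sub).
- move=> y; rewrite /cnt.
  case: (leqP y u) => hyu.
    apply: leq_trans (hc y); apply: subset_leq_card; apply/subsetP=> w.
    rewrite !inE => /andP[/orP[/eqP e|/andP[_ ->]] wy] //.
    by subst w; move: (leq_trans wy hyu); rewrite ltnn.
  case: (leqP y v) => hyv.
    apply: subset_leq_card; apply/subsetP=> w.
    rewrite !inE => /andP[/orP[/eqP e|/andP[wv wB]] wy]; first by subst w; rewrite uA.
    by rewrite wy andbT; apply: hbelow => //; apply: leq_trans wy hyv.
  apply: leq_trans (hc y).
  have : [set w in B' | w < y] \subset u |: ([set w in B | w < y] :\ v).
    apply/subsetP=> w; rewrite !inE => /andP[/orP[->|/andP[wv wB]] wy] //.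
    by rewrite wv wB wy orbT.
  move/subset_leq_card=> h1; rewrite /cnt (cardsD1 v [set w in B | w < y]) inE vB hyv /=.
  by apply: leq_trans h1 _; rewrite cardsU1 leq_add2r leq_b1.
Qed.

End S.


Lemma count_le_nth (y : nat) (s1 s2 : seq nat) : size s1 = size s2 ->
  (forall t, t < size s1 -> nth 0 s1 t <= nth 0 s2 t) ->
  count (fun x => x < y) s2 <= count (fun x => x < y) s1.
Proof.
elim: s1 s2 => [|a s1 IH] [|b s2] //= [hs] h.
apply: leq_add; last by apply: IH => // t ht; apply: (h t.+1).
have := h 0 isT => /= hab.
case: (ltnP b y) => hb //=.
by rewrite (leq_ltn_trans hab hb).
Qed.

Section S.
Variable n : nat.
Implicit Types (F : {set {set 'I_n}}) (A B : {set 'I_n}).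

Lemma cnt_count A y : cnt A y = count (fun x => x < y) (sorted_elems A).
Proof.
rewrite /cnt /sorted_elems count_sort count_map.
have -> : #|[set w in A | w < y]| = #|[seq w <- enum A | (w : 'I_n) < y]|.
  by apply: eq_card => w; rewrite !inE mem_filter mem_enum andbC.
rewrite (card_uniqP _) ?size_filter //.
by apply: filter_uniq; apply: enum_uniq.
Qed.

Lemma size_sorted A : size (sorted_elems A) = #|A|.
Proof. by rewrite /sorted_elems size_sort size_map cardE. Qed.

Lemma prec_cnt A B : shift_prec A B -> forall y, cnt B y <= cnt A y.
Proof.
move=> [hc h] y; rewrite !cnt_count; apply: count_le_nth.
  by rewrite !size_sorted.
by move=> t; rewrite size_sorted; apply: h.
Qed.

Lemma shifted_initial F :
  (forall i j : 'I_n, i < j -> shift_fam i j F = F) -> initial F.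
Proof.
move=> hF A B hp hB.
apply: (@shift_closure n F setT _ #|B :\: A| A B) => //.
- by move=> u v uv _; apply: fix_inv; apply: hF.
- by case: hp.
- exact: prec_cnt.
Qed.
End S.


Section S.
Variable n : nat.
Implicit Types (F : {set {set 'I_n}}) (A B : {set 'I_n}).

Lemma seg_lemma (S : {set 'I_n}) :
  (forall i j : 'I_n, j \in S -> i < j -> i \in S) -> S = [set i : 'I_n | i < #|S|].
Proof.
move=> hd; apply/setP=> i; rewrite inE; apply/idP/idP=> hi.
  have : [set w : 'I_n | w < i.+1] \subset S.
    apply/subsetP=> w; rewrite inE ltnS leq_eqVlt => /orP[/eqP e|wi].
      by rewrite (val_inj e).
    exact: hd hi wi.
  by move/subset_leq_card; rewrite card_lt.
apply/negPn/negP=> niS.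
have : S \subset [set w : 'I_n | w < i].
  apply/subsetP=> w wS; rewrite inE ltnNge leq_eqVlt; apply/negP=> /orP[/eqP e|iw].
    by rewrite (val_inj e) wS in niS.
  by rewrite (hd i w wS iw) in niS.
move/subset_leq_card; rewrite card_lt; first by rewrite leqNgt hi.
exact: ltnW.
Qed.

Variable F : {set {set 'I_n}}.
Local Notation E := (cover2_edge F).
Hypothesis hinv : forall u v : 'I_n, u < v -> ~~ E u v -> shift_fam u v F = F.
Hypothesis htri : triangle_free F.

Lemma mono (i j y : 'I_n) : i < j -> ~~ E i j -> E j y -> E i y.
Proof.
move=> ij nij ejy.
have hF := fix_inv (hinv ij nij).
move: (ejy); rewrite /cover2_edge => /andP[jy /forall_inP hA].
apply/andP; split.
  apply/negP=> /eqP e; subst y; by rewrite cover2_sym ejy in nij.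
apply/forall_inP=> A hA'; apply/negPn/negP; rewrite negb_or => /andP[iA yA].
have jA : j \in A by move: (hA A hA'); rewrite (negbTE yA) orbF.
have ji : (j == i) = false by rewrite -val_eqE /= gtn_eqF.
have yi : (y == i) = false.
  apply/negP=> /eqP e; subst y; by rewrite cover2_sym ejy in nij.
by have := hA _ (hF A hA' jA iA); rewrite !inE ji eqxx /= (negbTE yA) andbF yi.
Qed.

Lemma Klem (u v z w : 'I_n) : u != v -> ~~ E u v -> E v z -> E u w -> E v w.
Proof.
move=> uv nuv evz euw.
case: (ltngtP u v) => h; last by move/val_inj: h => e; rewrite e eqxx in uv.
  apply/negPn/negP=> nvw.
  have wv : w != v by apply/negP=> /eqP e; subst w; rewrite euw in nuv.
  case: (ltngtP v w) => h2; last by move/val_inj: h2 => e; rewrite e eqxx in wv.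
    have evu : E v u by apply: (mono h2 nvw); rewrite cover2_sym.
    by rewrite cover2_sym evu in nuv.
  have nwv : ~~ E w v by rewrite cover2_sym.
  have ewz := mono h2 nwv evz.
  have euz := mono h nuv evz.
  by apply: htri; exists u, w, z; split.
by apply: (mono h); rewrite // cover2_sym.
Qed.

End S.

Unset Implicit Arguments.

Theorem proposition5p4 (n k l : nat) (F G : {set {set 'I_n}}) :
  k + l < n ->
  uniformly k F -> uniformly l G ->
  nontrivial F -> nontrivial G ->
  cross_intersecting F G ->
  saturated_pair k l F G ->
  shifted_ad_extremis F G ->
  ~ (initial F /\ initial G) ->
  triangle_free F ->
  exists X Y : {set 'I_n},
    [/\ [disjoint X & Y],
        X :|: Y = [set i : 'I_n | i < #|X| + #|Y|],
        2 <= #|X| <= k,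
        2 <= #|Y| <= k &
        forall i j : 'I_n, cover2_edge F i j =
          ((i \in X) && (j \in Y)) || ((i \in Y) && (j \in X))].
Proof.
move=> hkl hF hG [F0 nsF] [G0 nsG] hcross hsat had hni htri.
have hkn : k < n by lia.
have hinv : forall u v : 'I_n, u < v -> ~~ cover2_edge F u v -> shift_fam u v F = F.
  move=> u v uv nuv; case: (had u v uv) => [[]//|hs].
  by have [_ e] := star_shift uv hs nsF; rewrite e in nuv.
have nostar : forall i : 'I_n, exists2 A, A \in F & i \notin A.
  move=> i; case: (boolP [exists A in F, i \notin A]).
    by move=> /exists_inP[A ? ?]; exists A.
  rewrite negb_exists_in => /forall_inP h; exfalso; apply: nsF; exists i => A hA.
  by have := h A hA; rewrite negbK.
case: (boolP [exists i : 'I_n, exists j : 'I_n,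
   (i < j) && ~~((shift_fam i j F == F) && (shift_fam i j G == G))]); last first.
  rewrite negb_exists => /forallP h; exfalso; apply: hni.
  have hb : forall i j : 'I_n, i < j -> shift_fam i j F = F /\ shift_fam i j G = G.
    move=> i j ij; move: (h i); rewrite negb_exists => /forallP /(_ j).
    by rewrite ij /= negbK => /andP[/eqP -> /eqP ->].
  by split; apply: shifted_initial => i j ij; have [? ?] := hb i j ij.
move=> /existsP[i0 /existsP[j0 /andP[ij hnot]]].
have hs : is_star (shift_fam i0 j0 F).
  case: (had i0 j0 ij) => [[e1 e2]|//].
  by rewrite e1 e2 !eqxx in hnot.
have [hst he] := star_shift ij hs nsF.
set X := [set w | cover2_edge F j0 w].
set Y := [set w | cover2_edge F i0 w].
have Esym : forall x y, cover2_edge F x y = cover2_edge F y x by move=> x y; apply: cover2_sym.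
have Eirr : forall x, cover2_edge F x x = false by move=> x; apply: cover2_irr.
have hdisj : [disjoint X & Y].
  apply/pred0P=> w /=; rewrite !inE; apply/negP=> /andP[h1 h2].
  by apply: htri; exists i0, j0, w; split.
have hin : forall i j, cover2_edge F i j -> i \in X :|: Y.
  move=> i j eij; rewrite !inE; apply/negPn/negP; rewrite negb_or => /andP[nbi nai].
  have ai : i0 != i by apply/negP=> /eqP e; subst i; rewrite Esym he in nbi.
  have := Klem hinv htri ai nai eij he; rewrite Esym => ebi.
  by rewrite ebi in nbi.
have hcomp : forall x y, x \in X -> y \in Y -> cover2_edge F x y.
  move=> x y; rewrite !inE => ebx eay.
  case: (eqVneq i0 x) => [<- //|ax].
  have nax : ~~ cover2_edge F i0 x.
    apply/negP=> eax; apply: htri; exists j0, x, i0; split => //.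
      by rewrite Esym.
    by rewrite Esym.
  have exb : cover2_edge F x j0 by rewrite Esym.
  exact (Klem hinv htri ax nax exb eay).
have hdeg : forall v, #|[set w | cover2_edge F v w]| <= k.
  move=> v; have [A hA vA] := nostar v; rewrite -(hF A hA).
  apply: subset_leq_card; apply/subsetP=> w; rewrite inE => /andP[_ /forall_inP /(_ A hA)].
  by rewrite (negbTE vA).
have hnb : forall j, j \in X :|: Y -> exists z, cover2_edge F j z.
  move=> j; rewrite !inE => /orP[h|h]; [exists j0 | exists i0]; by rewrite Esym.
have hdown : forall i j : 'I_n, j \in X :|: Y -> i < j -> i \in X :|: Y.
  move=> i j hj ij'; have [z ejz] := hnb j hj.
  case: (boolP (cover2_edge F i j)) => eij; first exact: hin eij.
  exact: hin (mono hinv ij' eij ejz).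
have hseg := seg_lemma hdown.
have hcard : #|X :|: Y| = #|X| + #|Y|.
  by rewrite cardsU (disjoint_setI0 hdisj) cards0 subn0.
have i0H : i0 \in X :|: Y by apply: (hin _ _ he).
have j0H : j0 \in X :|: Y by apply: (hin j0 i0); rewrite Esym.
have hbig : k.+2 <= #|X :|: Y|.
  rewrite leqNgt; apply/negP=> hsmall; rewrite ltnS in hsmall.
  have hT : forall u v : 'I_n, u < v -> v \in ~: (X :|: Y) -> forall A, A \in F ->
      v \in A -> u \notin A -> u |: (A :\ v) \in F.
    move=> u v uv; rewrite inE => vH.
    have nuv : ~~ cover2_edge F u v.
      apply/negP=> euv; have : v \in X :|: Y by apply: (hin v u); rewrite Esym.
      by rewrite (negbTE vH).
    exact (fix_inv (hinv u v uv nuv)).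
  have hlt : forall i, i \in X :|: Y -> i < k.+1.
    by move=> i iH; move: iH; rewrite {1}hseg inE => ilt; apply: leq_trans ilt hsmall.
  have hEcard : forall i, i \in X :|: Y -> #|[set v : 'I_n | (v <= k) && (v != i)]| = k.
    move=> i iH.
    have -> : [set v : 'I_n | (v <= k) && (v != i)] = [set v : 'I_n | v < k.+1] :\ i.
      by apply/setP=> v; rewrite !inE andbC.
    have := cardsD1 i [set v : 'I_n | v < k.+1]; rewrite card_lt // inE (hlt i iH).
    by rewrite add1n => /eqP; rewrite eqSS => /eqP <-.
  have hEin : forall i, i \in X :|: Y -> [set v : 'I_n | (v <= k) && (v != i)] \in F.
    move=> i iH; have [A hA iA] := nostar i.
    apply: (shift_closure hT (d := #|A :\: [set v : 'I_n | (v <= k) && (v != i)]|) _ _ _ _ hA) => //.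
    - by rewrite (hF A hA) hEcard.
    - apply/subsetP=> w; rewrite inE => /andP[nw wA]; rewrite inE in nw.
      have wi : w != i by apply/negP=> /eqP e; subst w; rewrite wA in iA.
      rewrite wi andbT -ltnNge in nw.
      rewrite in_setC hseg inE -leqNgt; apply: leq_trans hsmall nw.
    - move=> y; rewrite /cnt; case: (leqP y k.+1) => hy.
        apply: subset_leq_card; apply/subsetP=> w; rewrite !inE => /andP[wA wy].
        have wi : w != i by apply/negP=> /eqP e; subst w; rewrite wA in iA.
        by rewrite wi wy andbT -ltnS (leq_trans wy hy).
      have -> : [set w in [set v : 'I_n | (v <= k) && (v != i)] | w < y]
           = [set v : 'I_n | (v <= k) && (v != i)].
        apply/setP=> w; rewrite !inE; case: (leqP w k) => //= wk.
        by rewrite (leq_ltn_trans wk (ltnW hy)) andbT.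
      rewrite hEcard // -(hF A hA); apply: subset_leq_card; apply/subsetP=> w.
      by rewrite inE => /andP[].
  have e0 := hEin i0 i0H; have e1 := hEin j0 j0H.
  have ik : i0 <= k by rewrite -ltnS hlt.
  have jk : j0 <= k by rewrite -ltnS hlt.
  have heq : i0 |: ([set v : 'I_n | (v <= k) && (v != i0)] :\ j0)
           = [set v : 'I_n | (v <= k) && (v != j0)].
    apply/setP=> w; rewrite !inE; case: (eqVneq w i0) => [->|wi] /=.
      by rewrite ik -val_eqE /= ltn_eqF.
    by rewrite andbT andbC.
  have := hst _ e0; rewrite /shift_set heq e1 !andbF /= !inE eqxx andbF.
  by [].
have hX := hdeg j0; have hY := hdeg i0; rewrite -/X in hX; rewrite -/Y in hY.
exists X, Y; split => //.
- by rewrite -hcard.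
- apply/andP; split => //; move: hbig; rewrite hcard => hb; rewrite -(leq_add2r k); apply: leq_trans hb _; by rewrite leq_add2l.
- apply/andP; split => //; move: hbig; rewrite hcard => hb; rewrite -(leq_add2l #|X|); apply: leq_trans _ hb; by rewrite addn2 !ltnS.
- move=> i j; apply/idP/idP.
    move=> eij; have := hin _ _ eij; have : j \in X :|: Y by apply: (hin j i); rewrite Esym.
    rewrite !inE => /orP[jX|jY] /orP[iX|iY]; rewrite ?iX ?iY ?jX ?jY ?orbT //.
      by exfalso; apply: htri; exists j0, i, j; split.
    by exfalso; apply: htri; exists i0, i, j; split.
  by move=> /orP[/andP[iX jY]|/andP[iY jX]]; [exact: hcomp | rewrite Esym; exact: hcomp].
Qed.
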